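(* Let $\theta:\mathbb{R}\to(0,\infty)$ be a periodic function and $\alpha>0$. Then the following statements are equivalent. (i) $\theta(y+\delta)\le e^{\alpha\delta}\theta(y)$ for all $y>0$ and $\delta>0$. (ii) $\theta(y+\delta)\le e^{\alpha\delta}\theta(y)$ for all $y\in\mathbb{R}$ and $\delta\ge0$. (iii) $\theta(y-\delta)\ge e^{-\alpha\delta}\theta(y)$ for all $y\in\mathbb{R}$ and $\delta\ge0$. (iv) The mapping $t\mapsto t^{-\alpha}\theta(\log t)$ is non-increasing for $t>0$. If $\theta$ is additionally differentiable, then each of (i)–(iv) is equivalent to (v) $\theta'(y)\le\alpha\,\theta(y)$ for all $y\in\mathbb{R}$. *)

(* Defs.v *)
From Stdlib Require Import Reals.
From Coquelicot Require Import Coquelicot.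
Open Scope R_scope.

Definition periodic (theta : R -> R) : Prop :=
  exists T : R, 0 < T /\ forall x : R, theta (x + T) = theta x.

Definition cond_i (theta : R -> R) (alpha : R) : Prop :=
  forall y delta : R, 0 < y -> 0 < delta -> theta (y + delta) <= exp (alpha * delta) * theta y.

Definition cond_ii (theta : R -> R) (alpha : R) : Prop :=
  forall y delta : R, 0 <= delta -> theta (y + delta) <= exp (alpha * delta) * theta y.

Definition cond_iii (theta : R -> R) (alpha : R) : Prop :=
  forall y delta : R, 0 <= delta -> theta (y - delta) >= exp (- alpha * delta) * theta y.

Definition cond_iv (theta : R -> R) (alpha : R) : Prop :=
  forall s t : R, 0 < s -> s <= t ->
    Rpower t (- alpha) * theta (ln t) <= Rpower s (- alpha) * theta (ln s).

(* Condition (v), meaningful when theta is differentiable everywhere. *)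
Definition cond_v (theta : R -> R) (alpha : R) : Prop :=
  forall y : R, Derive theta y <= alpha * theta y.

(* Main.v *)
Require Import Defs.
From Stdlib Require Import Reals Lra.
From Coquelicot Require Import Coquelicot.
Open Scope R_scope.

Definition GG (theta : R -> R) (alpha : R) := fun x => exp (- alpha * x) * theta x.

Lemma L1 theta alpha : cond_ii theta alpha <-> decreasing (GG theta alpha).
Proof.
  unfold cond_ii, decreasing, GG; split.
  - intros H x y Hxy.
    assert (H1 := H x (y - x) ltac:(lra)).
    replace (x + (y - x)) with y in H1 by ring.
    assert (E : exp (- alpha * x) = exp (- alpha * y) * exp (alpha * (y - x))).
    { rewrite <- exp_plus. f_equal. ring. }
    rewrite E, Rmult_assoc.
    apply Rmult_le_compat_l; [left; apply exp_pos | exact H1].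
  - intros H y d Hd.
    assert (H1 := H y (y + d) ltac:(lra)).
    assert (E : exp (alpha * d) = exp (- alpha * y) * / exp (- alpha * (y + d))).
    { rewrite <- exp_Ropp, <- exp_plus. f_equal. ring. }
    rewrite E.
    apply (Rmult_le_reg_l (exp (- alpha * (y + d)))); [apply exp_pos|].
    replace (exp (- alpha * (y + d)) * (exp (- alpha * y) * / exp (- alpha * (y + d)) * theta y))
      with (exp (- alpha * y) * theta y).
    + exact H1.
    + field. apply Rgt_not_eq, exp_pos.
Qed.

Lemma L2 theta alpha : cond_ii theta alpha <-> cond_iii theta alpha.
Proof.
  unfold cond_ii, cond_iii; split.
  - intros H y d Hd.
    assert (H1 := H (y - d) d Hd).
    replace (y - d + d) with y in H1 by ring.
    apply Rle_ge.
    apply (Rmult_le_reg_l (exp (alpha * d))); [apply exp_pos|].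
    rewrite <- Rmult_assoc, <- exp_plus.
    replace (alpha * d + - alpha * d) with 0 by ring. rewrite exp_0, Rmult_1_l. exact H1.
  - intros H y d Hd.
    assert (H1 := H (y + d) d Hd).
    replace (y + d - d) with y in H1 by ring.
    apply Rge_le in H1.
    apply (Rmult_le_reg_l (exp (- alpha * d))); [apply exp_pos|].
    rewrite <- Rmult_assoc, <- exp_plus.
    replace (- alpha * d + alpha * d) with 0 by ring. rewrite exp_0, Rmult_1_l. exact H1.
Qed.

Lemma L3 theta alpha : cond_iv theta alpha <-> decreasing (GG theta alpha).
Proof.
  unfold cond_iv, decreasing, GG, Rpower; split.
  - intros H x y Hxy.
    assert (H1 := H (exp x) (exp y) (exp_pos x)).
    rewrite !ln_exp in H1.
    apply H1. destruct Hxy as [Hl|He]; [left; apply exp_increasing; exact Hl| right; now subst].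
  - intros H s t Hs Hst.
    assert (Hl : ln s <= ln t).
    { destruct Hst as [Hl|He]; [left; apply ln_increasing; lra | right; now subst]. }
    exact (H _ _ Hl).
Qed.

Lemma shift_n (theta : R -> R) (T : R) (HT : forall x, theta (x + T) = theta x) :
  forall n x, theta (x + INR n * T) = theta x.
Proof.
  induction n as [|n IH]; intro x.
  - simpl. f_equal. ring.
  - rewrite S_INR. replace (x + (INR n + 1) * T) with ((x + INR n * T) + T) by ring.
    rewrite HT. apply IH.
Qed.

Lemma L4 theta alpha : periodic theta -> (cond_i theta alpha <-> cond_ii theta alpha).
Proof.
  intros [T [HT Hp]]. unfold cond_i, cond_ii; split.
  - intros H y d Hd.
    destruct Hd as [Hd|Hd].
    2:{ subst. rewrite Rmult_0_r, exp_0, Rplus_0_r. lra. }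
    destruct (archimed (Rabs y / T)) as [Ha _].
    assert (Hz : (0 <= up (Rabs y / T))%Z).
    { apply le_IZR. assert (0 <= Rabs y / T).
      { apply Rmult_le_pos; [apply Rabs_pos| left; apply Rinv_0_lt_compat; lra]. } lra. }
    destruct (IZN _ Hz) as [n Hn]. rewrite Hn, <- INR_IZR_INZ in Ha.
    assert (Hpos : 0 < y + INR n * T).
    { assert (Rabs y < INR n * T).
      { apply (Rmult_lt_compat_r T) in Ha; [|lra].
        unfold Rdiv in Ha. rewrite Rmult_assoc, Rinv_l, Rmult_1_r in Ha; lra. }
      assert (- y <= Rabs y) by apply Rabs_maj2.
      lra. }
    assert (H1 := H _ _ Hpos Hd).
    replace (y + INR n * T + d) with ((y + d) + INR n * T) in H1 by ring.
    rewrite !(shift_n theta T Hp) in H1. exact H1.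
  - intros H y d _ Hd. apply H. lra.
Qed.

Lemma GG_der theta alpha (Hd : forall y, ex_derive theta y) x :
  is_derive (GG theta alpha) x (exp (- alpha * x) * (Derive theta x - alpha * theta x)).
Proof.
  unfold GG.
  assert (A : is_derive (fun x => exp (- alpha * x)) x (- alpha * exp (- alpha * x))).
  { auto_derive; [auto|ring]. }
  assert (B := Derive_correct _ _ (Hd x)).
  assert (C := is_derive_mult _ _ x _ _ A B (fun a b => Rmult_comm a b)).
  replace (exp (- alpha * x) * (Derive theta x - alpha * theta x))
    with (plus (mult (- alpha * exp (- alpha * x)) (theta x)) (mult (exp (- alpha * x)) (Derive theta x))).
  exact C.
  unfold plus, mult; simpl; ring.
Qed.

Lemma L5 theta alpha (Hd : forall y, ex_derive theta y) :
  cond_v theta alpha <-> decreasing (GG theta alpha).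
Proof.
  assert (Hex : forall x, ex_derive (GG theta alpha) x).
  { intro x. eexists. apply GG_der; auto. }
  set (pr := fun x => ex_derive_Reals_0 _ x (Hex x)).
  assert (HD : forall x, derive_pt (GG theta alpha) x (pr x)
     = exp (- alpha * x) * (Derive theta x - alpha * theta x)).
  { intro x. rewrite Derive_Reals. apply is_derive_unique, GG_der; auto. }
  unfold cond_v; split.
  - intros H. apply (nonpos_derivative_1 _ pr). intro x. rewrite HD.
    assert (0 < exp (- alpha * x)) by apply exp_pos.
    assert (Derive theta x - alpha * theta x <= 0) by (specialize (H x); lra).
    nra.
  - intros H y. assert (H1 := nonpos_derivative_0 _ pr H y). rewrite HD in H1.
    assert (0 < exp (- alpha * y)) by apply exp_pos.
    assert (Derive theta y - alpha * theta y <= 0).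
    { destruct (Rle_dec (Derive theta y - alpha * theta y) 0); auto. nra. }
    lra.
Qed.

Theorem lemmaA1 (theta : R -> R) (alpha : R)
  (Hpos : forall x : R, 0 < theta x) (Hper : periodic theta) (Halpha : 0 < alpha) :
  (cond_i theta alpha <-> cond_ii theta alpha) /\
  (cond_ii theta alpha <-> cond_iii theta alpha) /\
  (cond_iii theta alpha <-> cond_iv theta alpha) /\
  ((forall y : R, ex_derive theta y) -> (cond_i theta alpha <-> cond_v theta alpha)).
Proof.
  pose proof (L1 theta alpha). pose proof (L2 theta alpha). pose proof (L3 theta alpha).
  pose proof (L4 theta alpha Hper).
  split; [tauto|]. split; [tauto|]. split; [tauto|].
  intro Hd. pose proof (L5 theta alpha Hd). tauto.
Qed.
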